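(* Fix $p\geq 3$, let $\lambda=\lambda_p=2\cos(\pi/p)$ and $U=ST$ where $S=\begin{pmatrix}1&\lambda\\0&1\end{pmatrix}$, $T=\begin{pmatrix}0&-1\\1&0\end{pmatrix}$. Then $\frac{1}{U^k(0)}=U^{p-k+1}(0)$ for every integer $k$.
   Context: Matrices act on $\mathbb{R}\cup\{\infty\}$ by linear fractional transformations $z\mapsto\frac{az+b}{cz+d}$, with the conventions $1/0=\infty$ and $1/\infty=0$. *)

(* Defs.v *)
From HB Require Import structures.
From mathcomp Require Import all_boot all_order all_algebra.
From mathcomp Require Import all_classical all_reals all_analysis.
Set Implicit Arguments. Unset Strict Implicit. Unset Printing Implicit Defensive.
Import Order.TTheory GRing.Theory Num.Theory.
Local Open Scope ring_scope.

(* The extended real line R ∪ {∞}: [Some x] is the real x, [None] is ∞. *)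
Definition extR (R : realType) := option R.

Definition ext_inv (R : realType) (z : extR R) : extR R :=
  match z with
  | None => Some 0
  | Some x => if x == 0 then None else Some x^-1
  end.

Definition mx2 (R : realType) (a b c d : R) : 'M[R]_2 :=
  \matrix_(i < 2, j < 2)
    if i == ord0 then (if j == ord0 then a else b) else (if j == ord0 then c else d).

Definition mobius (R : realType) (M : 'M[R]_2) (z : extR R) : extR R :=
  let a := M ord0 ord0 in let b := M ord0 ord_max in
  let c := M ord_max ord0 in let d := M ord_max ord_max in
  match z with
  | Some x => if c * x + d == 0 then None else Some ((a * x + b) / (c * x + d))
  | None => if c == 0 then None else Some (a / c)
  end.

Definition lambda_p (R : realType) (p : nat) : R := 2 * cos (pi / p%:R).
Definition Smx (R : realType) (p : nat) : 'M[R]_2 := mx2 1 (lambda_p R p) 0 1.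
Definition Tmx (R : realType) : 'M[R]_2 := mx2 0 (-1) 1 0.
Definition Umx (R : realType) (p : nat) : 'M[R]_2 := Smx R p *m Tmx R.

(* Main.v *)
Require Import Defs.
From HB Require Import structures.
From mathcomp Require Import all_boot all_order all_algebra.
From mathcomp Require Import all_classical all_reals all_analysis.
From mathcomp Require Import ring lra.
Import Order.TTheory GRing.Theory Num.Theory.
Local Open Scope ring_scope.
Section S.
Variable R : realType.
Lemma mx2M (a b c d e f g h : R) :
  mx2 a b c d * mx2 e f g h = mx2 (a*e+b*g) (a*f+b*h) (c*e+d*g) (c*f+d*h).
Proof.
apply/matrixP => i j; rewrite !mxE !big_ord_recl big_ord0 !mxE /=.
by case: i => [[|[|?]] ?] //=; case: j => [[|[|?]] ?] //=; rewrite addr0.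
Qed.
Lemma mx2Z (k a b c d : R) : k *: mx2 a b c d = mx2 (k*a) (k*b) (k*c) (k*d).
Proof.
apply/matrixP => i j; rewrite !mxE.
by case: i => [[|[|?]] ?] //=; case: j => [[|[|?]] ?] //=.
Qed.
Lemma mx2_1 : (1 : 'M[R]_2) = mx2 1 0 0 1.
Proof.
apply/matrixP => i j; rewrite !mxE.
by case: i => [[|[|?]] ?] //=; case: j => [[|[|?]] ?] //=.
Qed.
Lemma mx2E (a b c d : R) : [/\ mx2 a b c d ord0 ord0 = a, mx2 a b c d ord0 ord_max = b,
  mx2 a b c d ord_max ord0 = c & mx2 a b c d ord_max ord_max = d].
Proof. by rewrite !mxE. Qed.

Variable p : nat.
Hypothesis hp : (3 <= p)%N.
Let th : R := pi / p%:R.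
Let s (x : R) := sin (x * th).
Let C (x : R) := mx2 (s (x + 1)) (- s x) (s x) (- s (x - 1)).
Let l := lambda_p R p.

Lemma UE : Umx R p = mx2 l (-1) 1 0.
Proof.
rewrite /Umx /Smx /Tmx -/l.
have -> : forall A B : 'M[R]_2, A *m B = A * B by [].
rewrite mx2M; congr mx2; ring.
Qed.

Lemma srec (x : R) : s (x + 1) + s (x - 1) = l * s x.
Proof.
rewrite /s /l /lambda_p -/th mulrDl mulrBl mul1r sinD sinB; ring.
Qed.

Lemma UC (x : R) : Umx R p * C x = C (x + 1).
Proof.
rewrite UE /C mx2M.
have h1 := srec x; have h2 := srec (x + 1).
have e1 : x + 1 - 1 = x by ring.
have e2 : x + 1 + 1 = x + 2 by ring.
rewrite e1 e2; rewrite e1 e2 in h2.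
congr mx2; lra.
Qed.

Lemma uU : Umx R p \is a GRing.unit.
Proof.
apply/unitrP; exists (mx2 0 1 (-1) l); rewrite UE !mx2M mx2_1; split; congr mx2; ring.
Qed.

Lemma sth_neq0 : sin th != 0.
Proof.
have p0 : (0 < p%:R :> R) by rewrite ltr0n; case: p hp.
apply/lt0r_neq0/sin_gt0_pi; apply/andP; split.
  by rewrite /th divr_gt0 // pi_gt0.
rewrite /th ltr_pdivrMr // ltr_pMr ?pi_gt0 //.
by rewrite (ltr_nat R 1 p); case: p hp => [|[|]].
Qed.

Lemma scA (k : R) (A B : 'M[R]_2) : k *: (A * B) = A * (k *: B).
Proof. exact: scalemxAr. Qed.

Lemma powC (k : int) : sin th *: (Umx R p ^ k) = C k%:~R.
Proof.
elim/int_rec: k => [|n IH|n IH].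
- rewrite expr0z /C mx2_1 mx2Z /s !mul0r add0r sub0r mul1r mulN1r sinN sin0 oppr0 mulr0 opprK mulr1.
  by [].
- rewrite exprSz; transitivity (Umx R p * (sin th *: Umx R p ^ n)); first exact: scA.
  rewrite IH UC; congr C.
  by rewrite -!pmulrn -natr1.
- apply: (mulrI uU); rewrite UC; transitivity (sin th *: (Umx R p * Umx R p ^ (- (n.+1 : int)))); first by rewrite scA.
  rewrite -{1}(expr1z (Umx R p)) -exprzDr ?uU //.
  have -> : 1 + - (n.+1 : int) = - (n : int) by rewrite -addn1 PoszD opprD addrCA subrr addr0.
  rewrite IH; congr C.
  by rewrite !mulrNz -!pmulrn -natr1 opprD addrNK.
Qed.

Lemma entries (M : 'M[R]_2) (x : R) : sin th *: M = C x ->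
  M ord0 ord_max = - s x / sin th /\ M ord_max ord_max = - s (x - 1) / sin th.
Proof.
move=> h; have h1 := congr1 (fun A : 'M[R]_2 => A ord0 ord_max) h.
have h2 := congr1 (fun A : 'M[R]_2 => A ord_max ord_max) h.
move: h1 h2; rewrite /C !mxE /= => h1 h2.
have st := sth_neq0.
split; [rewrite -h1 | rewrite -h2]; field; exact: st.
Qed.

Lemma pth : p%:R * th = pi.
Proof.
have p0 : (p%:R != 0 :> R) by rewrite pnatr_eq0; case: p hp.
rewrite /th; field; exact: p0.
Qed.

Lemma sBpi (y : R) : sin (pi - y) = sin y.
Proof. by rewrite sinB sinpi cospi; ring. Qed.

Lemma not_both (x : R) : s x = 0 -> s (x - 1) = 0 -> False.
Proof.
rewrite /s mulrBl mul1r sinB => h1; rewrite h1 mul0r sub0r => /eqP.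
rewrite oppr_eq0 mulf_eq0 (negbTE sth_neq0) orbF => /eqP h2.
have := cos2Dsin2 (x * th); rewrite h1 h2; lra.
Qed.

End S.

Theorem lemma4p2 (R : realType) (p : nat) (hp : (3 <= p)%N) (k : int) :
  ext_inv (mobius (Umx R p ^ k) (Some 0))
  = mobius (Umx R p ^ ((p%:Z - k + 1)%R)) (Some 0).
Proof.
have [b1 d1] := @entries R p hp _ _ (@powC R p k).
have [b2 d2] := @entries R p hp _ _ (@powC R p (p%:Z - k + 1)).
rewrite /mobius !mulr0 !add0r b1 d1 b2 d2.
set th := pi / p%:R.
have e1 : sin ((p%:Z - k + 1)%:~R * th) = sin ((k%:~R - 1) * th).
  rewrite -sBpi; congr sin; rewrite -(@pth R p hp) /th intrD intrB; ring.
have e2 : sin (((p%:Z - k + 1)%:~R - 1) * th) = sin (k%:~R * th).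
  rewrite -sBpi; congr sin; rewrite -(@pth R p hp) /th intrD intrB; ring.
rewrite e1 e2.
have st := @sth_neq0 R p hp.
have nb := @not_both R p hp k%:~R.
move: nb; rewrite /th.
set a := sin (k%:~R * (pi / p%:R)).
set c := sin ((k%:~R - 1) * (pi / p%:R)).
set t := sin (pi / p%:R).
rewrite -/t in st => nb.
have ea : (- a / t == 0) = (a == 0) by rewrite mulf_eq0 invr_eq0 (negbTE st) orbF oppr_eq0.
have ec : (- c / t == 0) = (c == 0) by rewrite mulf_eq0 invr_eq0 (negbTE st) orbF oppr_eq0.
rewrite ec ea /=.
have [c0|c0] := eqVneq c 0.
  have [a0|a0] := eqVneq a 0; first by exfalso; exact: nb.
  by rewrite /= c0 oppr0 !mul0r.
rewrite /= mulf_eq0 invr_eq0 ec ea (negbTE c0) orbF.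
have [a0|a0] := eqVneq a 0 => //=.
congr Some; field; apply/and3P; split => //; exact: st.
Qed.
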